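(* Let $n\ge 1$. The cyclic group $\mathbb{Z}_n$ is code-perfect if and only if $n$ is odd, or $n=2d$ where $d=2$ or $d$ is odd.
   Context: For a subgroup $H$ of a finite abelian group $A$ (written additively with identity $0$), the subgroup sum graph $\Gamma_{A,H}$ is the simple undirected graph with vertex set $A$ in which distinct vertices $x,y$ are adjacent if and only if $x+y\in H\setminus\{0\}$. A perfect code in a graph is a set $C$ of vertices that is independent and such that every vertex not in $C$ is adjacent to exactly one vertex of $C$. A finite group $G$ is code-perfect if $\Gamma_{G,H}$ admits a perfect code for every normal subgroup $H$ of $G$. *)

(* Defs.v *)
From HB Require Import structures.
From mathcomp Require Import all_boot all_order all_algebra.
Set Implicit Arguments. Unset Strict Implicit. Unset Printing Implicit Defensive.
Import GRing.Theory.
Local Open Scope ring_scope.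

(* A finite abelian group, written additively, is a finZmodType. *)
Section SubgroupSumGraph.
Variable A : finZmodType.

Definition is_subgroup (H : {set A}) : bool :=
  (0 \in H) && [forall x in H, forall y in H, x - y \in H].

Definition ssg_adj (H : {set A}) (x y : A) : bool :=
  [&& x != y, x + y \in H & x + y != 0].

Definition perfect_code (H : {set A}) (C : {set A}) : Prop :=
  (forall x y, x \in C -> y \in C -> ~~ ssg_adj H x y) /\
  (forall x, x \notin C -> #|[set c in C | ssg_adj H x c]| = 1%N).

(* A is code-perfect: Gamma_{A,H} has a perfect code for every (normal)
   subgroup H; A is abelian so every subgroup is normal. *)
Definition code_perfect : Prop :=
  forall H : {set A}, is_subgroup H -> exists C : {set A}, perfect_code H C.
End SubgroupSumGraph.

(* Main.v *)
Require Import Defs.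
From mathcomp Require Import all_boot all_order all_algebra.
From mathcomp Require Import zify.
Set Implicit Arguments. Unset Strict Implicit. Unset Printing Implicit Defensive.
Import GRing.Theory.
Local Open Scope ring_scope.

Section Gen.
Variable A : finZmodType.
Variable H : {set A}.
Hypothesis hH : is_subgroup H.

Lemma H0 : 0 \in H. Proof. by case/andP: hH. Qed.

Lemma HB x y : x \in H -> y \in H -> x - y \in H.
Proof.
case/andP: hH => _ /forallP h xH yH.
by move: (h x); rewrite xH /= => /forallP /(_ y); rewrite yH.
Qed.

Lemma HN x : x \in H -> - x \in H.
Proof. by move=> hx; rewrite -sub0r; apply: HB H0 hx. Qed.

Lemma HD x y : x \in H -> y \in H -> x + y \in H.
Proof. by move=> hx hy; rewrite -[y]opprK; apply: HB hx (HN hy). Qed.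

Lemma HS u v : u \in H -> (v + u \in H) = (v \in H).
Proof.
move=> hu; apply/idP/idP => h; last exact: HD.
by have := HB h hu; rewrite addrK.
Qed.

Lemma HM x k : x \in H -> x *+ k \in H.
Proof. by move=> hx; elim: k => [|k IH]; rewrite ?mulr0n ?H0 // mulrS HD. Qed.

Definition K (x : A) := [set y | (y - x \in H) || (y + x \in H)].

Lemma K_self x : x \in K x.
Proof. by rewrite inE subrr H0. Qed.

Lemma K_eq x y : y \in K x -> K y = K x.
Proof.
rewrite inE => hy; apply/setP => z; rewrite !inE.
case/orP: hy => hy.
- rewrite -(@HS (y - x) (z - y) hy) -addrA addKr.
  rewrite -(@HS (y - x) (z + x) hy) -addrA (addrCA x) subrr addr0 //.
- rewrite -(@HS (y + x) (z - y) hy) -addrA addKr.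
  rewrite -(@HS (y + x) (z - x) hy) -addrA (addrCA (-x)) addNr addr0 orbC //.
Qed.

Definition local (S D : {set A}) :=
  [/\ D \subset S, (forall x y, x \in D -> y \in D -> ~~ ssg_adj H x y) &
      (forall x, x \in S -> x \notin D -> #|[set c in D | ssg_adj H x c]| = 1%N)].

Lemma indep_pair a x y : x \in [set a; -a] -> y \in [set a; -a] -> ~~ ssg_adj H x y.
Proof.
rewrite !inE => /orP[]/eqP-> /orP[]/eqP->;
  by rewrite /ssg_adj ?eqxx ?subrr ?addrN ?addNr ?eqxx ?andbF.
Qed.

Definition Hyp := forall a, a + a \in H ->
  (exists z, z + z = 0 /\ z - a \in H) \/ (forall x, x - a \in H -> x = a \/ x = -a).

Lemma Kmem a x : a + a \in H -> (x \in K a) = (x - a \in H).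
Proof.
move=> haa; rewrite inE.
have -> : x + a = (x - a) + (a + a) by rewrite -addrA addKr.
by rewrite (HS _ haa) orbb.
Qed.

Lemma local_ex : Hyp -> forall a, exists D, local (K a) D.
Proof.
move=> hyp a.
case: (boolP (a + a \in H)) => haa.
- case: (hyp a haa) => [[z [zz hz]] | hall].
  + exists [set z]; split.
    * by rewrite sub1set Kmem.
    * by move=> x y; rewrite !inE => /eqP-> /eqP->; rewrite /ssg_adj eqxx.
    * move=> x; rewrite Kmem // inE => hx xz.
      have zN : z = - z by apply/eqP; rewrite -addr_eq0 zz.
      apply/eqP/cards1P; exists z; apply/setP => c; rewrite !inE.
      case: (eqVneq c z) => [->|] //=.
      rewrite /ssg_adj xz /=.
      have e : x + z = (x - a) - (z - a).
        by rewrite opprB addrA subrK {1}zN.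
      by rewrite {1}e HB //= addr_eq0 -zN xz.
  + exists [set a; -a]; split.
    * apply/subsetP => x; rewrite Kmem // !inE => /orP[]/eqP->.
        by rewrite subrr H0.
      by rewrite -opprD HN.
    * exact: indep_pair.
    * move=> x; rewrite Kmem // !inE => hx.
      by case: (hall x hx) => ->; rewrite eqxx ?orbT.
- exists [set a; -a]; split.
  + apply/subsetP => x; rewrite !inE => /orP[]/eqP->.
      by rewrite subrr H0.
    by rewrite addNr H0 orbT.
  + exact: indep_pair.
  + move=> x; rewrite !inE negb_or => /orP[] hx /andP[xa xna].
    * apply/eqP/cards1P; exists (-a); apply/setP => c; rewrite !inE.
      case: (eqVneq c (-a)) => [->|cna]; rewrite /= ?orbF.
        by rewrite orbT /ssg_adj xna hx /= subr_eq0 xa.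
      case: (eqVneq c a) => [->|] //=.
      rewrite /ssg_adj.
      have -> : x + a = (a + a) + (x - a) by rewrite [RHS]addrC -addrA addKr.
      by rewrite (HS _ hx) (negPf haa) andbF.
    * apply/eqP/cards1P; exists a; apply/setP => c; rewrite !inE.
      case: (eqVneq c a) => [->|ca] /=.
        by rewrite /ssg_adj xa hx /= addr_eq0 xna.
      case: (eqVneq c (-a)) => [->|] //=.
      rewrite /ssg_adj.
      have -> : x + - a = (x + a) - (a + a) by rewrite opprD addrA addrK.
      suff -> : (x + a - (a + a) \in H) = false by rewrite andbF.
      apply/negP => h; move/negP: haa; apply.
      by have := HB hx h; rewrite opprB addrC addrNK.
Qed.

Lemma global : Hyp -> exists C, perfect_code H C.
Proof.
move=> hyp.
have : forall S : {set A}, exists D : {set A}, forall a, S = K a -> local S D.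
  move=> S; case: (boolP [exists a, S == K a]) => [/existsP[a /eqP->]|/existsP no].
    by have [D hD] := local_ex hyp a; exists D.
  by exists set0 => a e; case: no; exists a; rewrite e.
case/fin_all_exists => f hf.
exists [set x | x \in f (K x)]; split.
- move=> x y; rewrite !inE => hx hy; apply/negP => adj.
  have yK : y \in K x.
    by rewrite inE; apply/orP; right; case/and3P: adj => _; rewrite addrC.
  move: hy; rewrite (K_eq yK) => hy.
  have [_ hI _] := hf (K x) x erefl.
  by move/negP: (hI x y hx hy).
- move=> x; rewrite inE => hx.
  have [_ _ hC] := hf (K x) x erefl.
  rewrite -(hC x (K_self x) hx); apply: eq_card => c; rewrite !inE.
  case adj: (ssg_adj H x c); rewrite ?andbF ?andbT //.
  have cK : c \in K x.
    by rewrite inE; apply/orP; right; case/and3P: adj => _; rewrite addrC.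
  by rewrite (K_eq cK).
Qed.

Lemma hyp_odd d : odd d -> (forall a : A, a *+ (2 * d) = 0) -> Hyp.
Proof.
move=> od hd a haa; left; exists (a *+ d).
have zz : a *+ d + a *+ d = 0 by rewrite -mulrnDr addnn -mul2n hd.
split => //.
have hz : a + a *+ d \in H.
  have e : (d.+1 = 2 * (d./2).+1)%N.
    by have := odd_double_half d; rewrite od -muln2; lia.
  by rewrite -mulrS e mulrnA mulr2n HM.
have -> : a *+ d - a = (a *+ d + a *+ d) - (a + a *+ d).
  by rewrite opprD addrCA addrK addrC.
by rewrite HB // zz H0.
Qed.

End Gen.

Lemma Zn_mul (m : nat) (a : 'I_m.+1) : a *+ m.+1 = 0.
Proof. by rewrite Zp_mulrn; apply: val_inj => /=; rewrite modnMl. Qed.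

Lemma I4_fact : forall a x : 'I_4, (a + a != 0) ==> (x != a) ==> (x != -a) ==>
  ((0 - a == x - a) || (0 - a == - (x - a))).
Proof. by do 2 case => [[|[|[|[|//]]]] ?]. Qed.

Lemma hyp4 (H : {set 'I_4}) : is_subgroup H -> Hyp H.
Proof.
move=> hH a haa.
case: (eqVneq (a + a) 0) => [e|ne].
  by left; exists a; rewrite subrr H0.
case: (boolP [forall x, (x - a \in H) ==> (x == a) || (x == -a)]) => [/forallP h|].
  by right => x hx; move: (h x); rewrite hx /= => /orP[]/eqP; auto.
rewrite negb_forall => /existsP[x]; rewrite negb_imply negb_or => /andP[hx /andP[xa xna]].
left; exists 0; split; first by rewrite addr0.
have := I4_fact a x; rewrite ne xa xna /= => /orP[]/eqP->; first exact: hx.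
exact: HN.
Qed.

Lemma hyp_cyc (m : nat) (H : {set 'I_m.+1}) : is_subgroup H ->
  (odd m.+1 \/ exists d : nat, m.+1 = (2 * d)%N /\ (d = 2%N \/ odd d)) -> Hyp H.
Proof.
move=> hH [o|[d [e [d2|od]]]].
- apply: (@hyp_odd _ _ hH m.+1 o) => a.
  by rewrite mulnC mulrnA Zn_mul mul0rn.
- have em : m = 3%N by lia.
  move: H hH; subst m; exact: hyp4.
- apply: (@hyp_odd _ _ hH d od) => a.
  by rewrite -e Zn_mul.
Qed.

Section NoCode.
Variable A : finZmodType.

Lemma noC (w : A) : let H := [set x + x | x : A] in
  w \notin H -> w + w != 0 -> (w + w) + (w + w) != 0 ->
  (forall z, z + z = 0 -> z \in H) -> forall C, ~ perfect_code H C.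
Proof.
move=> H wH w2 w4 inv C [indep cnt].
have dbl x : x + x \in H by apply/imsetP; exists x.
have hH : is_subgroup H.
  apply/andP; split; first by rewrite -[0]addr0 dbl.
  apply/forallP => x; apply/implyP => /imsetP[u _ ->].
  apply/forallP => y; apply/implyP => /imsetP[v _ ->].
  have -> : u + u - (v + v) = (u - v) + (u - v).
    by rewrite opprD addrACA.
  exact: dbl.
have claim x : x \notin H -> x \in C -> False.
  move=> xH xC.
  have xnx : x != - x.
    by apply/negP => /eqP e; move/negP: xH; apply; apply: inv; rewrite {1}e addNr.
  case: (boolP (- x \in C)) => nxC.
  - have [t [tH t0 xt]] : exists t, [/\ t \in H, t != 0 & x + x + t != 0].
      case: (eqVneq (x + x + (w + w)) 0) => e.
        exists ((w + w) + (w + w)); split => //.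
        by rewrite addrA e add0r.
      by exists (w + w); split.
    set y := x + t.
    have yx : y != x.
      apply/negP => /eqP e; move/negP: t0; apply; apply/eqP.
      by apply: (@addrI _ x); rewrite addr0.
    have adjyx : ssg_adj H y x.
      rewrite /ssg_adj yx /y addrAC HD // ?dbl //=.
    have yC : y \notin C.
      by apply/negP => yC; move/negP: (indep _ _ xC yC); apply; rewrite /ssg_adj eq_sym yx /= addrC; case/and3P: adjyx => _ -> ->.
    have := cnt y yC.
    have sub : [set x; -x] \subset [set c in C | ssg_adj H y c].
      apply/subsetP => c; rewrite !inE => /orP[]/eqP->; rewrite ?xC ?nxC //=.
      rewrite /ssg_adj /y addrAC subrr add0r tH t0 andbT.
      rewrite andbT; apply/negP => /eqP e; move/negP: xt; apply; apply/eqP.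
      by rewrite -addrA e addrN.
    move=> c1; have := subset_leq_card sub; by rewrite c1 cards2 xnx.
  - have := cnt (- x) nxC; move/eqP/cards1P => [c hc].
    have : c \in [set c in C | ssg_adj H (- x) c] by rewrite hc set11.
    rewrite inE => /andP[cC /and3P[nxc hnc nc0]].
    move/negP: (indep _ _ xC cC); apply.
    rewrite /ssg_adj.
    have e2 : x + c = (- x + c) + (x + x) by rewrite [- x + c]addrC -addrA addKr addrC.
    rewrite {1}e2 HD ?dbl //=.
    apply/andP; split.
      apply/negP => /eqP e; move/negP: nc0; apply; apply/eqP; by rewrite -e addNr.
    apply/negP => /eqP e.
    have : c = - x by rewrite -(addKr x c) e addr0.
    by move=> ec; move: nxC; rewrite -ec cC.
case: (boolP (w \in C)) => wC; first exact: claim wC.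
have := cnt w wC; move/eqP/cards1P => [c hc].
have : c \in [set c in C | ssg_adj H w c] by rewrite hc set11.
rewrite inE => /andP[cC /and3P[_ hwc _]].
apply: (claim c) => //; apply/negP => cH; move/negP: wH; apply.
by have := HB hH hwc cH; rewrite addrK.
Qed.
End NoCode.

Theorem corollary4p6 (m : nat) :
  code_perfect 'I_m.+1 <->
  (odd m.+1 \/ exists d : nat, m.+1 = (2 * d)%N /\ (d = 2%N \/ odd d)).
Proof.
split; last first.
  by move=> hc H hH; apply: global hH (hyp_cyc hH hc).
move=> cp.
case: (boolP (odd m.+1)) => [o|eo]; [by left | right].
have hn : m.+1 = (2 * (m.+1)./2)%N.
  by have := odd_double_half m.+1; rewrite (negPf eo) -muln2 /=; lia.
exists (m.+1)./2; split => //.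
set d := (m.+1)./2 in hn *.
case: (boolP (odd d)) => [od|ed]; [by right | left].
case: (eqVneq d 2%N) => [//|d2]; exfalso.
set k := d./2.
have hd : d = (2 * k)%N.
  by have := odd_double_half d; rewrite (negPf ed) -muln2 /=; lia.
have k2 : (2 <= k)%N by move: d2; rewrite hd; lia.
have hm : m.+1 = (4 * k)%N by lia.
pose w : 'I_m.+1 := inord 1.
have vw : nat_of_ord w = 1%N by rewrite /w inordK //; lia.
set H := [set x + x | x : 'I_m.+1].
have hH : is_subgroup H.
  apply/andP; split; first by apply/imsetP; exists 0 => //; rewrite addr0.
  apply/forallP => x; apply/implyP => /imsetP[u _ ->].
  apply/forallP => y; apply/implyP => /imsetP[v _ ->].
  apply/imsetP; exists (u - v) => //.
  by rewrite opprD addrACA.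
have [C hC] := cp H hH.
apply: (noC (w := w)) hC.
- apply/imsetP => [[x _ e]].
  have := congr1 (fun u : 'I_m.+1 => odd (val u)) e.
  rewrite /= vw odd_mod ?addnn ?odd_double //.
  by rewrite hm oddM.
- apply/eqP => e; have := congr1 val e; rewrite /= vw modn_small //; lia.
- apply/eqP => e; have := congr1 val e; rewrite /= vw (modn_small (_ : 1 + 1 < m.+1)%N); try lia.
  rewrite modn_small //; lia.
- move=> z e; have := congr1 val e => /= hz.
  have zlt := ltn_ord z.
  have hq : ((z + z) %/ m.+1 < 2)%N by rewrite ltn_divLR //; lia.
  have := divn_eq (z + z)%N m.+1; rewrite hz addn0.
  case hq' : ((z + z) %/ m.+1)%N => [|[|q]]; last by rewrite hq' in hq.
    move=> hz0; apply/imsetP; exists z => //; apply: val_inj => /=.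
    rewrite mul0n in hz0; rewrite hz0 mod0n; lia.
  move=> hz1; apply/imsetP; exists (inord k) => //; apply: val_inj => /=.
  rewrite inordK; last lia.
  rewrite modn_small; lia.
Qed.
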